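(* Let $q$ be a prime power, $n$ a positive integer with $\gcd(q,n)=1$, $s\in\mathbb{Z}_n^*$, $t\in\mathbb{Z}_n$ with $qt\equiv t\pmod n$, $s^{-1}$ a positive integer with $ss^{-1}\equiv1\pmod n$, and $P\subseteq\mathbb{Z}_n$ a $\mu_q$-invariant subset. Then $$f_{\rho_{s,t}(P)}(X)=\gcd\big(f_P(\theta^{-t}X^{s^{-1}}),\,X^n-1\big)=\gcd\big(\varphi_{s,t}(f_P(X)),\,X^n-1\big),$$ where $\gcd$ denotes the monic greatest common divisor in $\mathbb{F}_q[X]$.
   Context: Fix a primitive $n$-th root of unity $\theta$ in an extension of $\mathbb{F}_q$. $\mu_q:\mathbb{Z}_n\to\mathbb{Z}_n$, $i\mapsto qi\bmod n$; $P$ is $\mu_q$-invariant if $\mu_q(P)=P$. For such $P$, $f_P(X)=\prod_{i\in P}(X-\theta^i)\in\mathbb{F}_q[X]$. $\rho_{s,t}:\mathbb{Z}_n\to\mathbb{Z}_n$, $i\mapsto s(i+t)\bmod n$. $\varphi_{s,t}(a(X))$ is the unique polynomial of degree $<n$ congruent to $a(\theta^{-t}X^{s^{-1}})$ modulo $X^n-1$ (note $\theta^{-t}\in\mathbb{F}_q$). *)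

(* Defs.v *)
From HB Require Import structures.
From mathcomp Require Import all_boot all_order all_algebra all_field.
Set Implicit Arguments. Unset Strict Implicit. Unset Printing Implicit Defensive.
Import GRing.Theory.
Local Open Scope ring_scope.

(* Z_n is represented by 'I_n (n > 0); arithmetic is done on nat mod n. *)

Definition mu (q n : nat) (P : {set 'I_n}) : {set 'I_n} :=
  [set j : 'I_n | [exists i in P, nat_of_ord j == (q * i) %% n]%N].

Definition mu_invariant (q n : nat) (P : {set 'I_n}) : bool := mu q P == P.

Definition rho (n s t : nat) (P : {set 'I_n}) : {set 'I_n} :=
  [set j : 'I_n | [exists i in P, nat_of_ord j == (s * (i + t)) %% n]%N].

Definition fP (L : fieldType) (n : nat) (theta : L) (P : {set 'I_n}) : {poly L} :=
  \prod_(i in P) ('X - (theta ^+ i)%:P).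

Definition mgcdp (L : fieldType) (p r : {poly L}) : {poly L} :=
  (lead_coef (gcdp p r))^-1 *: gcdp p r.

Definition subst_st (L : fieldType) (theta : L) (t s' : nat) (a : {poly L}) : {poly L} :=
  a \Po ((theta ^- t) *: 'X^s').

Definition phi_st (L : fieldType) (n : nat) (theta : L) (t s' : nat) (a : {poly L})
  : {poly L} := subst_st theta t s' a %% ('X^n - 1).

(* Main.v *)
Require Import Defs.
From HB Require Import structures.
From mathcomp Require Import all_boot all_order all_algebra all_field.
Import GRing.Theory.
Local Open Scope ring_scope.

Lemma key (L : fieldType) (n : nat) (theta : L) (p : {poly L}) :
  n.-primitive_root theta ->
  mgcdp p ('X^n - 1) = \prod_(k : 'I_n | root p (theta ^+ k)) ('X - (theta ^+ k)%:P).
Proof.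
move=> prim.
set G := \prod_(k : 'I_n | _) _.
set H := \prod_(k : 'I_n | ~~ root p (theta ^+ k)) ('X - (theta ^+ k)%:P).
have rGH : 'X^n - 1 = G * H.
  by rewrite -(factor_Xn_sub_1 prim) big_mkord (bigID (fun k : 'I_n => root p (theta ^+ k))).
have Gm : G \is monic by apply: monic_prod_XsubC.
have GdvdP : G %| p.
  rewrite /G -big_filter -(big_map (fun k : 'I_n => theta ^+ k) xpredT (fun z => 'X - z%:P)).
  apply: uniq_roots_dvdp.
  - by apply/allP => z /mapP [k]; rewrite mem_filter => /andP [hk _] ->.
  - rewrite uniq_rootsE map_inj_in_uniq ?filter_uniq ?index_enum_uniq //.
    move=> i j _ _ /eqP; rewrite (eq_prim_root_expr prim) !modn_small // => /eqP ij.
    exact: val_inj.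
have hcop : coprimep p H.
  rewrite /H; elim/big_rec: _ => [|k q hk hq]; first exact: coprimep1.
  by rewrite coprimepMr hq coprimep_XsubC hk.
have d_eqp : gcdp p ('X^n - 1) %= G.
  rewrite /eqp; apply/andP; split.
  - have: gcdp p ('X^n-1) %| G * H by rewrite -rGH dvdp_gcdr.
    rewrite Gauss_dvdpl //. rewrite coprimep_sym.
    by apply: coprimep_dvdl (dvdp_gcdl _ _) _; rewrite coprimep_sym.
  - by rewrite dvdp_gcd GdvdP rGH dvdp_mulIl.
have dn0 : gcdp p ('X^n - 1) != 0.
  by apply: contraTneq d_eqp => ->; rewrite eqp_sym eqp0 (monic_neq0 Gm).
have lc : lead_coef (gcdp p ('X^n - 1)) != 0 by rewrite lead_coef_eq0.
apply/eqP; rewrite -eqp_monic //.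
  exact: eqp_trans (eqp_scale _ (invr_neq0 lc)) d_eqp.
by rewrite /mgcdp monicE lead_coefZ mulVf.
Qed.
Lemma modarith (n s s' k i t : nat) : (k < n)%N -> (s * s' = 1 %[mod n])%N ->
  (k * s' == i + t %[mod n])%N = (k == s * (i + t) %% n)%N.
Proof.
move=> kn ss.
apply/eqP/eqP => [h | ->].
- rewrite -(modn_small kn) -[k in LHS]muln1 -modnMmr -ss modnMmr mulnCA.
  by rewrite -modnMmr h modnMmr.
- by rewrite modnMml -mulnA mulnCA -modnMmr mulnC ss modnMml mul1n.
Qed.

Lemma root_sub (L : fieldType) (n : nat) (theta : L) (s t : 'I_n) (s' : nat) (P : {set 'I_n}) (k : 'I_n) :
  n.-primitive_root theta -> (s * s' = 1 %[mod n])%N ->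
  root (subst_st theta t s' (fP theta P)) (theta ^+ k) = (k \in rho s t P).
Proof.
move=> prim ss.
have thn0 : theta != 0 by rewrite (prim_root_eq0 prim) -lt0n (prim_order_gt0 prim).
rewrite /root /subst_st horner_comp hornerZ hornerXn /fP horner_prod prodf_seq_eq0.
rewrite inE; apply/hasP/existsP => [[i hi /andP [iP /eqP]] | [i /andP [iP /eqP ki]]].
- rewrite hornerXsubC => /eqP; rewrite subr_eq0 => /eqP h; exists i; rewrite iP /=.
  rewrite -(@modarith n s s' k i t (ltn_ord k) ss) -(eq_prim_root_expr prim) exprD -h mulrC mulrA.
  by rewrite mulfV ?expf_neq0 // mul1r -exprM.
- exists i; first by rewrite mem_index_enum.
  rewrite iP /= hornerXsubC subr_eq0.
  have : (k * s' == i + t %[mod n])%N by rewrite (@modarith n s s' k i t (ltn_ord k) ss) ki.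
  rewrite -(eq_prim_root_expr prim) exprD => /eqP h.
  by rewrite -exprM h mulrCA mulVf ?expf_neq0 // mulr1.
Qed.

Theorem theorem2p8 (F : finFieldType) (L : fieldExtType F) (n : nat)
  (theta : L) (s t : 'I_n) (s' : nat) (P : {set 'I_n}) :
  (0 < n)%N ->
  coprime #|F| n ->
  n.-primitive_root theta ->
  coprime s n ->
  (#|F| * t = t %[mod n])%N ->
  (0 < s')%N ->
  (s * s' = 1 %[mod n])%N ->
  mu_invariant #|F| P ->
  fP theta (rho s t P) = mgcdp (subst_st theta t s' (fP theta P)) ('X^n - 1)
  /\ mgcdp (subst_st theta t s' (fP theta P)) ('X^n - 1)
     = mgcdp (phi_st n theta t s' (fP theta P)) ('X^n - 1).
Proof.
move=> n0 _ prim _ _ _ ss _.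
split.
  rewrite (key _ _ _ _ prim) /fP; apply: eq_bigl => k.
  by rewrite (root_sub _ _ _ _ _ _ _ _ prim ss).
rewrite !(key _ _ _ _ prim); apply: eq_bigl => k.
set p := subst_st _ _ _ _.
have r0 : ('X^n - 1 : {poly L}).[theta ^+ k] = 0.
  by rewrite hornerD hornerN hornerXn hornerC -exprM mulnC exprM (prim_expr_order prim) expr1n subrr.
rewrite /phi_st -/p /root {1}(divp_eq p ('X^n - 1)) hornerD hornerM r0 mulr0 add0r.
by [].
Qed.
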